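(* Let $n, I, J_0, J_1, \dots, J_I$ be positive integers, let $P \subseteq \mathbb{R}^n$ be a closed convex set, let $c:\mathbb{R}^n \to \mathbb{R}$ and $\phi_{ij}:\mathbb{R}^n\to\mathbb{R}$ ($i=0,\dots,I$, $j=1,\dots,J_i$) be continuous functions, let $A\in\mathbb{R}^{I\times n}$ with rows $A_{i\bullet}$, let $\eta\in\mathbb{R}^I$, and let $\psi_{ij}\in\mathbb{R}$, with $\psi_{ij}^{\pm} = \max(\pm\psi_{ij},0)$. Define $$\theta(x) = c(x) + \sum_{j=1}^{J_0}\psi_{0j}\,\mathbf{1}_{[0,\infty)}(\phi_{0j}(x)),\qquad X_{\rm AHS} = \Big\{x\in P : A_{i\bullet}x + \sum_{j=1}^{J_i}\psi_{ij}\,\mathbf{1}_{[0,\infty)}(\phi_{ij}(x)) \ge \eta_i,\ i=1,\dots,I\Big\},$$ and for $\varepsilon>0$ $$\theta^{\varepsilon}(x) = c(x) + \sum_{j=1}^{J_0}\psi_{0j}^+\,\mathbf{1}_{[0,\infty)}(\phi_{0j}(x)) - \sum_{j=1}^{J_0}\psi_{0j}^-\,\mathbf{1}_{(-\varepsilon,\infty)}(\phi_{0j}(x)),$$ $$X_{\rm AHS}^{\varepsilon} = \Big\{x\in P : A_{i\bullet}x + \sum_{j=1}^{J_i}\psi_{ij}^+\,\mathbf{1}_{[0,\infty)}(\phi_{ij}(x)) - \sum_{j=1}^{J_i}\psi_{ij}^-\,\mathbf{1}_{(-\varepsilon,\infty)}(\phi_{ij}(x)) \ge \eta_i,\ i=1,\dots,I\Big\}.$$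 Suppose that $\sup_{x\in X_{\rm AHS}}\theta(x)$ is finite (in particular $X_{\rm AHS}\neq\emptyset$). Then $$\sup_{x\in X_{\rm AHS}}\theta(x) = \lim_{\varepsilon\downarrow 0}\ \sup_{x\in X^{\varepsilon}_{\rm AHS}}\theta^{\varepsilon}(x) = \sup_{\varepsilon>0}\ \sup_{x\in X^{\varepsilon}_{\rm AHS}}\theta^{\varepsilon}(x).$$ Furthermore, if $\sup_{x\in X_{\rm AHS}}\theta(x)$ is attained at some $x^*\in X_{\rm AHS}$, then there exists $\varepsilon_*>0$ such that $x^*$ is a maximizer of $\theta^{\varepsilon}$ on $X^{\varepsilon}_{\rm AHS}$ for all $\varepsilon\in(0,\varepsilon_*]$.
   Context: $\mathbf{1}_S$ denotes the indicator function of a set $S\subseteq\mathbb{R}$ (equal to $1$ on $S$ and $0$ elsewhere). The supremum over an empty set is $-\infty$. *)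

(* Defs.v *)
From HB Require Import structures.
From mathcomp Require Import all_boot all_order all_algebra.
From mathcomp Require Import all_classical all_reals all_analysis.
Set Implicit Arguments. Unset Strict Implicit. Unset Printing Implicit Defensive.
Import Order.TTheory GRing.Theory Num.Theory.
Import numFieldNormedType.Exports.
Local Open Scope classical_set_scope.
Local Open Scope ring_scope.

(* Indices i = 0..I and j = 1..J_i are encoded as nat indices, j shifted to
   0..J_i-1; the constraint rows i = 1..I correspond to row (i-1) : 'I_I of A
   and entry (i-1) of eta. *)

Definition ind0 {R : realType} (t : R) : R := if 0 <= t then 1 else 0.
Definition indeps {R : realType} (eps t : R) : R := if - eps < t then 1 else 0.

Definition ppart {R : realType} (t : R) : R := Num.max t 0.
Definition npart {R : realType} (t : R) : R := Num.max (- t) 0.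

Section AHS.
Variables (R : realType) (n I : nat).
Variables (P : set 'cV[R]_n) (c : 'cV[R]_n -> R) (A : 'M[R]_(I, n))
  (eta : 'cV[R]_I) (J : nat -> nat) (phi : nat -> nat -> 'cV[R]_n -> R)
  (psi : nat -> nat -> R).

Definition theta (x : 'cV[R]_n) : R :=
  c x + \sum_(j < J 0) psi 0 j * ind0 (phi 0 j x).

Definition X_AHS : set 'cV[R]_n :=
  [set x | P x /\ forall i : 'I_I,
     (A *m x) i 0 + \sum_(j < J i.+1) psi i.+1 j * ind0 (phi i.+1 j x)
       >= eta i 0].

Definition theta_eps (eps : R) (x : 'cV[R]_n) : R :=
  c x + \sum_(j < J 0) ppart (psi 0 j) * ind0 (phi 0 j x)
      - \sum_(j < J 0) npart (psi 0 j) * indeps eps (phi 0 j x).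

Definition X_AHS_eps (eps : R) : set 'cV[R]_n :=
  [set x | P x /\ forall i : 'I_I,
     (A *m x) i 0 + \sum_(j < J i.+1) ppart (psi i.+1 j) * ind0 (phi i.+1 j x)
       - \sum_(j < J i.+1) npart (psi i.+1 j) * indeps eps (phi i.+1 j x)
       >= eta i 0].

(* sup over X_AHS of theta, in the extended reals (sup of empty set = -oo) *)
Definition sup_AHS : \bar R := ereal_sup [set (theta x)%:E | x in X_AHS].

Definition sup_AHS_eps (eps : R) : \bar R :=
  ereal_sup [set (theta_eps eps x)%:E | x in X_AHS_eps eps].

End AHS.

(* Main.v *)
Require Import Defs.
From HB Require Import structures.
From mathcomp Require Import all_boot all_order all_algebra.
From mathcomp Require Import all_classical all_reals all_analysis.
From mathcomp Require Import lra.
Import Order.TTheory GRing.Theory Num.Theory.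
Import numFieldNormedType.Exports.
Local Open Scope classical_set_scope.
Local Open Scope ring_scope.

Lemma ind_le {R : realType} (eps t : R) : 0 < eps -> ind0 t <= indeps eps t.
Proof.
move=> he; rewrite /ind0 /indeps; case: ifPn => // h0.
by rewrite ifT // (lt_le_trans _ h0) // oppr_lt0.
by case: ifP.
Qed.

Lemma ind_eq {R : realType} (t : R) : exists2 e : R, 0 < e &
  forall eps, 0 < eps -> eps <= e -> indeps eps t = ind0 t.
Proof.
case: (leP 0 t) => ht.
  exists 1 => // eps he _; rewrite /ind0 /indeps ht ifT //.
  by rewrite (lt_le_trans _ ht) // oppr_lt0.
exists (- t); first by rewrite oppr_gt0.
move=> eps he het; rewrite /ind0 /indeps.
have -> : (0 <= t) = false by apply/negbTE; rewrite -ltNge.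
have -> : (- eps < t) = false by apply/negbTE; rewrite -leNgt lerNr.
by [].
Qed.

Lemma pn {R : realType} (a : R) : ppart a - npart a = a.
Proof.
rewrite /ppart /npart /Order.max; case: ifPn => h1; case: ifPn => h2; rewrite ?subr0 ?sub0r ?opprK //; lra.
Qed.

Lemma npart_ge0 {R : realType} (a : R) : 0 <= npart a.
Proof. rewrite /npart /Order.max; case: ifPn => //; lra. Qed.

Lemma sum_eq {R : realType} k (p f g : 'I_k -> R) : (forall j, g j = f j) ->
  \sum_(j < k) ppart (p j) * f j - \sum_(j < k) npart (p j) * g j
  = \sum_(j < k) p j * f j.
Proof.
move=> h; rewrite -sumrB; apply: eq_bigr => j _.
by rewrite h -mulrBl pn.
Qed.

Lemma sum_le {R : realType} k (p f g : 'I_k -> R) : (forall j, f j <= g j) ->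
  \sum_(j < k) ppart (p j) * f j - \sum_(j < k) npart (p j) * g j
  <= \sum_(j < k) p j * f j.
Proof.
move=> h; rewrite -sumrB; apply: ler_sum => j _.
rewrite -{3}(pn (p j)) mulrBl lerD2l lerN2.
by apply: ler_wpM2l; [exact: npart_ge0 | exact: h].
Qed.

Lemma uniform_small {R : realType} {T : finType} (Q : T -> R -> Prop) :
  (forall t, exists2 e : R, 0 < e & forall eps, 0 < eps -> eps <= e -> Q t eps) ->
  exists2 e : R, 0 < e & forall eps, 0 < eps -> eps <= e -> forall t, Q t eps.
Proof.
move=> h.
suff [e he H] : exists2 e : R, 0 < e & forall eps, 0 < eps -> eps <= e ->
   forall t, t \in enum T -> Q t eps.
  by exists e => // eps h1 h2 t; apply: H => //; rewrite mem_enum.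
elim: (enum T) => [|a s [e he H]]; first by exists 1.
have [ea hea Ha] := h a.
exists (Num.min e ea); first by rewrite lt_min he hea.
move=> eps h1; rewrite le_min => /andP[h2 h3] t; rewrite in_cons => /orP[/eqP->|ts].
  exact: Ha.
exact: H.
Qed.

Lemma eps_le {R : realType} {n I : nat} {J : nat -> nat}
  {P : set 'cV[R]_n} (c : 'cV[R]_n -> R)
  {phi : nat -> nat -> 'cV[R]_n -> R} {A : 'M[R]_(I, n)} {eta : 'cV[R]_I}
  {psi : nat -> nat -> R} {eps x} : 0 < eps ->
  X_AHS_eps P A eta J phi psi eps x ->
  X_AHS P A eta J phi psi x /\ theta_eps c J phi psi eps x <= theta c J phi psi x.
Proof.
move=> he [HP HX]; split.
  split=> // i; apply: le_trans (HX i) _.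
  rewrite -addrA lerD2l; apply: sum_le => j; exact: ind_le.
rewrite /theta_eps /theta -addrA lerD2l; apply: sum_le => j; exact: ind_le.
Qed.

Lemma eps_eq {R : realType} {n I : nat} (J : nat -> nat)
  (P : set 'cV[R]_n) (c : 'cV[R]_n -> R)
  (phi : nat -> nat -> 'cV[R]_n -> R) (A : 'M[R]_(I, n)) (eta : 'cV[R]_I)
  (psi : nat -> nat -> R) x : exists2 e : R, 0 < e &
  forall eps, 0 < eps -> eps <= e ->
  (X_AHS P A eta J phi psi x -> X_AHS_eps P A eta J phi psi eps x) /\
  theta_eps c J phi psi eps x = theta c J phi psi x.
Proof.
have [e0 he0 H0] := uniform_small
  (fun (j : 'I_(J 0)) eps => indeps eps (phi 0 j x) = ind0 (phi 0 j x))
  (fun j => ind_eq _).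
have [e1 he1 H1] := uniform_small
  (fun (i : 'I_I) eps => forall j : 'I_(J i.+1),
      indeps eps (phi i.+1 j x) = ind0 (phi i.+1 j x))
  (fun i => uniform_small _ (fun j => ind_eq _)).
exists (Num.min e0 e1); first by rewrite lt_min he0 he1.
move=> eps he; rewrite le_min => /andP[h0 h1]; split.
  move=> [HP HX]; split=> // i; rewrite -addrA sum_eq //.
  exact: (H1 eps he h1 i).
by rewrite /theta_eps /theta -addrA sum_eq // => j; exact: H0.
Qed.

Theorem proposition2 (R : realType) (n I : nat) (J : nat -> nat)
  (P : set 'cV[R]_n) (c : 'cV[R]_n -> R)
  (phi : nat -> nat -> 'cV[R]_n -> R) (A : 'M[R]_(I, n)) (eta : 'cV[R]_I)
  (psi : nat -> nat -> R) :
  (0 < n)%N -> (0 < I)%N -> (forall i, (i <= I)%N -> (0 < J i)%N) ->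
  closed P -> convex_set (P : set (convex_lmodType 'cV[R]_n)) ->
  continuous c ->
  (forall i j, (i <= I)%N -> (j < J i)%N -> continuous (phi i j)) ->
  sup_AHS P c A eta J phi psi \is a fin_num ->
  ((fun eps => sup_AHS_eps P c A eta J phi psi eps) x @[x --> 0^'+]
     --> sup_AHS P c A eta J phi psi)
  /\ sup_AHS P c A eta J phi psi =
     ereal_sup [set sup_AHS_eps P c A eta J phi psi eps | eps in `]0, +oo[]
  /\ (forall xs, X_AHS P A eta J phi psi xs ->
        (theta c J phi psi xs)%:E = sup_AHS P c A eta J phi psi ->
        exists2 es : R, 0 < es &
          forall eps, 0 < eps -> eps <= es ->
            X_AHS_eps P A eta J phi psi eps xs /\
            forall y, X_AHS_eps P A eta J phi psi eps y ->
              theta_eps c J phi psi eps y <= theta_eps c J phi psi eps xs).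
Proof.
move=> _ _ _ _ _ _ _ hfin.
have ubS : forall x, X_AHS P A eta J phi psi x ->
    ((theta c J phi psi x)%:E <= sup_AHS P c A eta J phi psi)%E.
  by move=> x Hx; apply: ereal_sup_ubound; exists x.
have ub : forall eps, 0 < eps ->
    (sup_AHS_eps P c A eta J phi psi eps <= sup_AHS P c A eta J phi psi)%E.
  move=> eps he; apply: ge_ereal_sup => _ [x Hx <-].
  have [HX Ht] := eps_le c he Hx.
  apply: le_trans (ubS x HX); by rewrite lee_fin.
have lb : forall x, X_AHS P A eta J phi psi x -> exists2 e : R, 0 < e &
    forall eps, 0 < eps -> eps <= e ->
    ((theta c J phi psi x)%:E <= sup_AHS_eps P c A eta J phi psi eps)%E.
  move=> x Hx; have [e he H] := eps_eq J P c phi A eta psi x.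
  exists e => // eps h1 h2; have [H1 H2] := H eps h1 h2.
  by rewrite -H2; apply: ereal_sup_ubound; exists x => //; apply: H1.
split; last split.
- move: hfin ub lb ubS; case Hs: (sup_AHS P c A eta J phi psi) => [s| |] // _ ub lb ubS.
  have [_ [x0 Hx0 <-]] : exists2 y, [set (theta c J phi psi x)%:E | x in X_AHS P A eta J phi psi] y & ((s - 1)%:E < y)%E.
    by apply: ereal_sup_gt; rewrite -/(sup_AHS _ _ _ _ _ _ _) Hs lte_fin ltrBlDr ltrDl.
  move=> _.
  have [e0 he0 H0] := lb x0 Hx0.
  apply/fine_cvgP; split.
    near=> eps.
    have h1 : 0 < eps by near: eps; exact: nbhs_right_gt.
    have h2 : eps <= e0 by near: eps; exact: nbhs_right_le.
    rewrite fin_numElt; apply/andP; split.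
      by apply: lt_le_trans (H0 eps h1 h2); rewrite ltNyr.
    by apply: le_lt_trans (ub eps h1) _; rewrite ltry.
  apply/cvgrPdist_lt => d hd.
  have [_ [x Hx <-]] : exists2 y, [set (theta c J phi psi x)%:E | x in X_AHS P A eta J phi psi] y & ((s - d)%:E < y)%E.
    by apply: ereal_sup_gt; rewrite -/(sup_AHS _ _ _ _ _ _ _) Hs lte_fin ltrBlDr ltrDl.
  rewrite lte_fin => hx.
  have [e he H] := lb x Hx.
  near=> eps.
  have h1 : 0 < eps by near: eps; exact: nbhs_right_gt.
  have h2 : eps <= e by near: eps; exact: nbhs_right_le.
  have := H eps h1 h2; have := ub eps h1.
  rewrite /comp; case: (sup_AHS_eps _ _ _ _ _ _ _ _) => [r| |] //=; rewrite !lee_fin => hr1 hr2.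
  rewrite ger0_norm; last by rewrite subr_ge0.
  lra.
- apply/eqP; rewrite eq_le; apply/andP; split.
    apply: ge_ereal_sup => _ [x Hx <-].
    have [e he H] := lb x Hx.
    apply: le_trans (H e he (lexx e)) _.
    apply: ereal_sup_ubound; exists e => //=.
    by rewrite in_itv /= he.
  apply: ge_ereal_sup => _ [e he <-]; apply: ub.
  by move: he; rewrite /= in_itv /= andbT.
- move=> xs Hxs Hth.
  have [e he H] := eps_eq J P c phi A eta psi xs.
  exists e => // eps h1 h2; have [H1 H2] := H eps h1 h2.
  split; first exact: H1.
  move=> y Hy; have [HY Ht] := eps_le c h1 Hy.
  rewrite H2; apply: le_trans Ht _.
  by rewrite -lee_fin Hth; apply: ubS.
Unshelve. all: by end_near.
Qed.
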